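(* Let $(X,\pi)$ be a symmetric two-player game with relative payoff game $(X,\Delta)$. If $(X,\Delta)$ does not contain a strict improvement cycle, then it does not contain an imitation cycle.
   Context: $\pi(x,y)$ is the payoff of the player choosing $x$ against $y$; $\Delta(x,y)=\pi(x,y)-\pi(y,x)$. In the two-player game $(X,\Delta)$, at a profile $(x,y)\in X\times X$ player 1 gets $\Delta(x,y)$ and player 2 gets $\Delta(y,x)$. A sequential path is a sequence of profiles in which consecutive profiles differ in exactly one player's action; it is a strict improvement path if at each step the player who switches strictly increases her own payoff; a strict improvement cycle is a finite strict improvement path $(x_0,y_0),\dots,(x_m,y_m)$ with $(x_0,y_0)=(x_m,y_m)$. A cycle is a finite sequence of profiles $(x_0,y_0),\dots,(x_n,y_n)$, not all equal, with $(x_0,y_0)=(x_n,y_n)$; it is an imitation cycle if for all consecutive profiles $(x_t,y_t),(x_{t+1},y_{t+1})$ on it, $\Delta(x_t,y_t)>0$ and $y_{t+1}=x_t$. *)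

(* Defs.v *)
From mathcomp Require Import all_boot all_order all_algebra.
Set Implicit Arguments. Unset Strict Implicit. Unset Printing Implicit Defensive.
Import Order.TTheory GRing.Theory Num.Theory.
Local Open Scope ring_scope.

(* pi x y : payoff of the player choosing x against y. *)
Definition Delta (R : realDomainType) (X : Type) (pi : X -> X -> R) (x y : X) : R :=
  pi x y - pi y x.

Definition payoff1 (R : realDomainType) (X : Type) (pi : X -> X -> R) (p : X * X) : R :=
  Delta pi p.1 p.2.
Definition payoff2 (R : realDomainType) (X : Type) (pi : X -> X -> R) (p : X * X) : R :=
  Delta pi p.2 p.1.

Definition strict_improvement_step (R : realDomainType) (X : Type)
    (pi : X -> X -> R) (a b : X * X) : Prop :=
  (b.1 <> a.1 /\ b.2 = a.2 /\ payoff1 pi a < payoff1 pi b) \/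
  (b.1 = a.1 /\ b.2 <> a.2 /\ payoff2 pi a < payoff2 pi b).

Definition has_strict_improvement_cycle (R : realDomainType) (X : Type)
    (pi : X -> X -> R) : Prop :=
  exists (m : nat) (p : nat -> X * X),
    (0 < m)%N /\ p 0%N = p m /\
    forall t : nat, (t < m)%N -> strict_improvement_step pi (p t) (p t.+1).

Definition has_imitation_cycle (R : realDomainType) (X : Type)
    (pi : X -> X -> R) : Prop :=
  exists (n : nat) (p : nat -> X * X),
    (exists t : nat, (t <= n)%N /\ p t <> p 0%N) /\ p 0%N = p n /\
    forall t : nat, (t < n)%N -> 0 < Delta pi (p t).1 (p t).2 /\ (p t.+1).2 = (p t).1.

(* Main.v *)
Require Import Defs.
From mathcomp Require Import all_boot all_order all_algebra.
From mathcomp Require Import lra.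
Import Order.TTheory GRing.Theory Num.Theory.
Local Open Scope ring_scope.

Theorem lemma4 (R : realDomainType) (X : Type) (pi : X -> X -> R) :
  ~ has_strict_improvement_cycle pi -> ~ has_imitation_cycle pi.
Proof.
move=> Hno [n [p [[t0 [Ht0 Hne]] [Hp0 Hstep]]]].
have n0 : (0 < n)%N.
  case: n Hp0 Hstep Ht0 => [|n] // _ _; rewrite leqn0 => /eqP Ht; by subst.
pose a s := (p (s %% n)%N).1.
have key : forall s, 0 < Delta pi (a s.+1) (a s).
  move=> s; rewrite /a.
  have hk : (s %% n < n)%N by rewrite ltn_pmod.
  have -> : (s.+1 %% n = (s %% n).+1 %% n)%N by rewrite -[in RHS]addn1 modnDml addn1.
  have [_ H2] := Hstep _ hk.
  have [hlt|hge] := ltnP (s %% n).+1 n.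
    rewrite modn_small // -H2.
    by have [] := Hstep _ hlt.
  have e : (s %% n).+1 = n by apply/eqP; rewrite eqn_leq hk hge.
  rewrite e modnn.
  rewrite e -Hp0 in H2.
  have [H3 _] := Hstep 0%N n0.
  by rewrite -H2.
have anti : forall x y, Delta pi y x = - Delta pi x y.
  by move=> x y; rewrite /Delta opprB.
have aper : forall s, a (s + n.*2)%N = a s.
  by move=> s; rewrite /a -addnn addnA !modnDr.
apply: Hno.
exists (n.*2), (fun s => if odd s then (a s, a s.+1) else (a s.+1, a s)).
split; first by rewrite double_gt0.
split.
  by rewrite /= odd_double /= -(aper 0%N) -(aper 1%N) add0n.
move=> s _.
case hs: (odd s) => /=; rewrite hs /=.
- (* odd: (a s, a s+1) -> (a s+2, a s+1), player 1 *)
  have k1 := key s; have k2 := key s.+1.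
  have lt : payoff1 pi (a s, a s.+1) < payoff1 pi (a s.+2, a s.+1).
    rewrite /payoff1 /= anti; lra.
  left; split; last by split.
  move=> /= E; move: lt; rewrite E; by rewrite ltxx.
- have k1 := key s; have k2 := key s.+1.
  have lt : payoff2 pi (a s.+1, a s) < payoff2 pi (a s.+1, a s.+2).
    rewrite /payoff2 /= anti; lra.
  right; split => //; split; last by [].
  move=> /= E; move: lt; rewrite E; by rewrite ltxx.
Qed.
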